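(* Let $\mathcal{H}=\mathbb{C}^{d_1}\otimes\cdots\otimes\mathbb{C}^{d_N}$ with all $d_i\ge2$ and $G=SL(d_1,\mathbb{C})\times\cdots\times SL(d_N,\mathbb{C})$ acting on $\mathcal{H}$ by $g_1\otimes\cdots\otimes g_N$. For every semistable vector $|\Psi\rangle\in\mathcal{H}$ one has $$\overline{[\,G|\Psi\rangle\,]}\setminus[\,\overline{G|\Psi\rangle}\,]\subset[\mathcal{N}\setminus\{0\}],$$ where the first closure is taken in $\mathbb{P}(\mathcal{H})$ and the second in $\mathcal{H}$.
   Context: For a set $X\subset\mathcal{H}$, $[X]$ denotes the set of classes $[x]\in\mathbb{P}(\mathcal{H})$ of its nonzero elements. Closures are in the standard (Euclidean) topology of $\mathcal{H}$ resp. $\mathbb{P}(\mathcal{H})$. The null-cone $\mathcal{N}$ is the set of vectors $|\psi\rangle\in\mathcal{H}$ with $0\in\overline{G|\psi\rangle}$; a vector is semistable if it is not in $\mathcal{N}$. *)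

(* Defs.v *)
From HB Require Import structures.
From mathcomp Require Import all_boot all_order all_algebra.
From mathcomp Require Import reals.
From mathcomp.real_closed Require Import complex.
Set Implicit Arguments. Unset Strict Implicit. Unset Printing Implicit Defensive.
Import Order.TTheory GRing.Theory Num.Theory.
Local Open Scope ring_scope.
Local Open Scope complex_scope.

Section Defs.
Variable R : realType.
Variable N : nat.
Variable d : 'I_N -> nat.

(* multi-indices (i_1,...,i_N), i_k < d_k : basis of C^{d_1} (x) ... (x) C^{d_N} *)
Definition midx := {dffun forall k : 'I_N, 'I_(d k)}.
(* vectors of H, in coordinates w.r.t. the product basis *)
Definition vec := midx -> R[i].

Definition vzero : vec := fun _ => 0.
Definition vscale (c : R[i]) (v : vec) : vec := fun j => c * v j.

Definition vnorm (v : vec) : R := Num.sqrt (\sum_(j : midx) (ComplexField.Normc.normc (v j)) ^+ 2).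
Definition vdist (v w : vec) : R := vnorm (fun j => v j - w j).

Definition grp_elt := forall k : 'I_N, 'M[R[i]]_(d k).
Definition inG (g : grp_elt) : Prop := forall k, \det (g k) = 1.

(* action of g_1 (x) ... (x) g_N *)
Definition act (g : grp_elt) (v : vec) : vec :=
  fun i => \sum_(j : midx) (\prod_(k : 'I_N) g k (i k) (j k)) * v j.

Definition Gorbit (v : vec) : vec -> Prop :=
  fun w => exists g, inG g /\ w = act g v.

Definition closureH (S : vec -> Prop) : vec -> Prop :=
  fun x => forall eps : R, 0 < eps -> exists y, S y /\ vdist x y < eps.

Definition openH (O : vec -> Prop) : Prop :=
  forall x, O x -> exists2 eps : R, 0 < eps & forall y, vdist x y < eps -> O y.

Definition nullcone (v : vec) : Prop := closureH (Gorbit v) vzero.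
Definition semistable (v : vec) : Prop := ~ nullcone v.

(* same class in P(H): [x] = [y] for nonzero x, y *)
Definition proj_eq (x y : vec) : Prop := exists2 c : R[i], c != 0 & y = vscale c x.

(* [x] lies in the closure of [S] in P(H), with P(H) carrying the quotient
   topology of H \ {0}: every open subset of P(H) containing [x] meets [S],
   i.e. every open, C^*-stable O subset of H\{0} containing x contains a
   nonzero element of S. *)
Definition in_closureP (S : vec -> Prop) (x : vec) : Prop :=
  forall O : vec -> Prop,
    openH O -> (forall y, O y -> y <> vzero) ->
    (forall y c, O y -> c != 0 -> O (vscale c y)) ->
    O x -> exists y, S y /\ y <> vzero /\ O y.
End Defs.

(* Main.v *)
Require Import Defs.
From HB Require Import structures.
From mathcomp Require Import all_boot all_order all_algebra.
From mathcomp Require Import reals.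
From mathcomp.real_closed Require Import complex.
From mathcomp Require Import lra ring.
Set Implicit Arguments. Unset Strict Implicit. Unset Printing Implicit Defensive.
Import Order.TTheory GRing.Theory Num.Theory.
Local Open Scope ring_scope.

Notation nc := ComplexField.Normc.normc.
Notation cRe := complex.Re.
Notation cIm := complex.Im.

Section NormC.
Variable R : realType.
Implicit Types (z w : R[i]).

Lemma nc_ge0 z : 0 <= nc z.
Proof. by case: z => a b; rewrite /= sqrtr_ge0. Qed.

Lemma nc_sq z : nc z ^+ 2 = (cRe z)^+2 + (cIm z)^+2.
Proof. by case: z => a b /=; rewrite sqr_sqrtr // addr_ge0 // sqr_ge0. Qed.

Lemma nc0 : nc (0 : R[i]) = 0.
Proof. exact: ComplexField.Normc.normc0. Qed.

Lemma nc1 : nc (1 : R[i]) = 1.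
Proof. exact: ComplexField.Normc.normc1. Qed.

Lemma ncM z w : nc (z * w) = nc z * nc w.
Proof. exact: ComplexField.Normc.normcM. Qed.

Lemma ncD z w : nc (z + w) <= nc z + nc w.
Proof. exact: le_normcD. Qed.

Lemma ncN z : nc (- z) = nc z.
Proof. exact: normcN. Qed.

Lemma nc_eq0 z : nc z = 0 -> z = 0.
Proof. exact: ComplexField.Normc.eq0_normc. Qed.

Lemma nc_gt0 z : z != 0 -> 0 < nc z.
Proof.
move=> nz; rewrite lt_def nc_ge0 andbT; apply/eqP => /nc_eq0 h.
by rewrite h eqxx in nz.
Qed.

Lemma ncV z : nc (z^-1) = (nc z)^-1.
Proof. exact: ComplexField.Normc.normcV. Qed.

Lemma ncB z w : nc (z - w) <= nc z + nc w.
Proof. by apply: (le_trans (ncD _ _)); rewrite ncN. Qed.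

Lemma ncBr z w : nc z - nc w <= nc (z - w).
Proof.
have := ncD (z - w) w; rewrite subrK; lra.
Qed.

Lemma ncBC z w : nc (z - w) = nc (w - z).
Proof. by rewrite -ncN opprB. Qed.

Lemma ncX z n : nc (z ^+ n) = nc z ^+ n.
Proof.
elim: n => [|n IH]; first by rewrite !expr0 nc1.
by rewrite !exprS ncM IH.
Qed.



Lemma Re_le_nc z : `|cRe z| <= nc z.
Proof.
rewrite -(ler_pXn2r (_ : (0 < 2)%N)) ?nnegrE ?nc_ge0 ?normr_ge0 //.
rewrite nc_sq real_normK ?num_real //; have := sqr_ge0 (cIm z); lra.
Qed.

Lemma Im_le_nc z : `|cIm z| <= nc z.
Proof.
rewrite -(ler_pXn2r (_ : (0 < 2)%N)) ?nnegrE ?nc_ge0 ?normr_ge0 //.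
rewrite nc_sq [`|cIm z| ^+ 2]real_normK ?num_real //; have := sqr_ge0 (cRe z); lra.
Qed.

Lemma nc_le_ReIm z : nc z <= `|cRe z| + `|cIm z|.
Proof.
rewrite -(ler_pXn2r (_ : (0 < 2)%N)) ?nnegrE ?nc_ge0 ?addr_ge0 ?normr_ge0 //.
rewrite nc_sq sqrrD !real_normK ?num_real //.
have : 0 <= `|cRe z| * `|cIm z| by rewrite mulr_ge0.
lra.
Qed.

End NormC.

From Stdlib Require Import Classical FunctionalExtensionality.

Section Vec.
Variable R : realType.
Variable N : nat.
Variable d : 'I_N -> nat.
Implicit Types (v w : vec R d).

Definition n1 v : R := \sum_(j : midx d) nc (v j).

Lemma n1_ge0 v : 0 <= n1 v.
Proof. by apply: sumr_ge0 => j _; apply: nc_ge0. Qed.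

Lemma nc_le_n1 v j : nc (v j) <= n1 v.
Proof.
rewrite /n1 (bigD1 j) //= lerDl; apply: sumr_ge0 => i _; apply: nc_ge0.
Qed.

Lemma vnorm_le_n1 v : vnorm v <= n1 v.
Proof.
rewrite /vnorm -(ler_pXn2r (_ : (0 < 2)%N)) ?nnegrE ?sqrtr_ge0 ?n1_ge0 //.
rewrite sqr_sqrtr; last by apply: sumr_ge0 => j _; apply: sqr_ge0.
rewrite expr2 {2}/n1 mulr_sumr; apply: ler_sum => j _.
by rewrite expr2; exact: (ler_wpM2r (nc_ge0 _) (nc_le_n1 _ _)).
Qed.

Lemma nc_le_vnorm v j : nc (v j) <= vnorm v.
Proof.
rewrite /vnorm -(ler_pXn2r (_ : (0 < 2)%N)) ?nnegrE ?sqrtr_ge0 ?nc_ge0 //.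
rewrite sqr_sqrtr; last by apply: sumr_ge0 => i _; apply: sqr_ge0.
by rewrite (bigD1 j) //= lerDl; apply: sumr_ge0 => i _; apply: sqr_ge0.
Qed.

Lemma n1B v w : n1 (fun j => v j - w j) <= n1 v + n1 w.
Proof. by rewrite /n1 -big_split /=; apply: ler_sum => j _; apply: ncB. Qed.

Lemma n1D v w : n1 (fun j => v j + w j) <= n1 v + n1 w.
Proof. by rewrite /n1 -big_split /=; apply: ler_sum => j _; apply: ncD. Qed.

Lemma n1Br v w : n1 v - n1 w <= n1 (fun j => v j - w j).
Proof.
have h : n1 v = n1 (fun j => (v j - w j) + w j).
  by rewrite /n1; apply: eq_bigr => j _; rewrite subrK.
rewrite lerBlDr h; exact: n1D.
Qed.

Lemma n1Z (c : R[i]) v : n1 (fun j => c * v j) = nc c * n1 v.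
Proof. by rewrite /n1 mulr_sumr; apply: eq_bigr => j _; rewrite ncM. Qed.

Lemma n1N v : n1 (fun j => - v j) = n1 v.
Proof. by rewrite /n1; apply: eq_bigr => j _; rewrite ncN. Qed.

Lemma n1_ext v w : (forall j, v j = w j) -> n1 v = n1 w.
Proof. by move=> h; rewrite /n1; apply: eq_bigr => j _; rewrite h. Qed.

Lemma n1_le_bound v (e : R) : (forall j, nc (v j) <= e) -> n1 v <= #|midx d|%:R * e.
Proof.
move=> h; rewrite /n1 mulr_natl -sumr_const; apply: ler_sum => j _; exact: h.
Qed.

Lemma vdist0_le v : vdist (@vzero R N d) v <= n1 v.
Proof.
apply: le_trans (vnorm_le_n1 _) _; rewrite -(n1N v) le_eqVlt; apply/orP; left.
by apply/eqP/n1_ext => j; rewrite /vzero sub0r.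
Qed.

Lemma vdist_le v w : vdist v w <= n1 (fun j => v j - w j).
Proof. exact: vnorm_le_n1. Qed.

Lemma semistable_bound (Psi : vec R d) : semistable Psi ->
  exists2 d0 : R, 0 < d0 & forall g, inG g -> d0 <= n1 (act g Psi).
Proof.
move=> ss; apply: NNPP => H; apply: ss => eps heps.
apply: NNPP => H2; apply: H; exists eps => // g hg.
rewrite leNgt; apply/negP => hlt; apply: H2.
exists (act g Psi); split; first by exists g.
exact: le_lt_trans (vdist0_le _) hlt.
Qed.

End Vec.

Require Import Defs.
From HB Require Import structures.
From mathcomp Require Import all_boot all_order all_algebra.
From mathcomp Require Import reals.
From mathcomp.real_closed Require Import complex.
From mathcomp Require Import lra ring.
From Stdlib Require Import Classical FunctionalExtensionality.
Set Implicit Arguments. Unset Strict Implicit. Unset Printing Implicit Defensive.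
Import Order.TTheory GRing.Theory Num.Theory.
Local Open Scope ring_scope.

Section Act.
Variable R : realType.
Variable N : nat.
Variable d : 'I_N -> nat.
Implicit Types (v w : vec R d) (g h : grp_elt R d).

Lemma prod_sum_midx (F : forall k : 'I_N, 'I_(d k) -> R[i]) :
  \prod_(k : 'I_N) \sum_(a : 'I_(d k)) F k a =
  \sum_(j : midx d) \prod_(k : 'I_N) F k (j k).
Proof.
pose P := fun k : 'I_N => [ffun a : 'I_(d k) => F k a].
have e1 : forall k, \sum_(a : 'I_(d k)) F k a = \sum_(a : 'I_(d k)) P k a.
  by move=> k; apply: eq_bigr => a _; rewrite ffunE.
under eq_bigr do rewrite e1 (big_tag P).
rewrite bigA_distr_big_dep.
rewrite -big_fprod.
rewrite (reindex (@fprod_of_dffun _ (fun k => 'I_(d k)))); last first.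
  by exists (@dffun_of_fprod _ (fun k => 'I_(d k))) => x _;
    [apply: fprod_of_dffunK | apply: dffun_of_fprodK].
apply: eq_bigr => j _; apply: eq_bigr => k _.
by rewrite fprodE ffunE.
Qed.


Definition gmul g h : grp_elt R d := fun k => g k *m h k.

Lemma act_comp g h v : act g (act h v) = act (gmul g h) v.
Proof.
apply: functional_extensionality => i; rewrite /act.
under eq_bigr do rewrite mulr_sumr.
rewrite exchange_big /=; apply: eq_bigr => l _.
under eq_bigr do rewrite mulrA.
rewrite -mulr_suml; congr (_ * _).
rewrite /gmul.
under [RHS]eq_bigr do rewrite mxE.
rewrite prod_sum_midx; apply: eq_bigr => j _.
by rewrite -big_split.
Qed.

Definition dmx (t : forall k : 'I_N, 'I_(d k) -> R[i]) : grp_elt R d :=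
  fun k => diag_mx (\row_(a < d k) t k a).

Definition tprod (t : forall k : 'I_N, 'I_(d k) -> R[i]) (j : midx d) : R[i] :=
  \prod_(k : 'I_N) t k (j k).

Lemma act_diag_l t g v i : act (gmul (dmx t) g) v i = tprod t i * act g v i.
Proof.
rewrite /act mulr_sumr; apply: eq_bigr => j _.
rewrite mulrA; congr (_ * _); rewrite /tprod -big_split /=.
by apply: eq_bigr => k _; rewrite /gmul /dmx mul_diag_mx mxE mxE.
Qed.

Lemma act_sub g v w :
  act g (fun j => v j - w j) = (fun i => act g v i - act g w i).
Proof.
apply: functional_extensionality => i; rewrite /act -sumrB.
by apply: eq_bigr => j _; rewrite mulrBr.
Qed.

Lemma act_scale g (c : R[i]) v :
  act g (fun j => c * v j) = (fun i => c * act g v i).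
Proof.
apply: functional_extensionality => i; rewrite /act mulr_sumr.
by apply: eq_bigr => j _; rewrite mulrCA.
Qed.

Lemma nc_sum (I : finType) (F : I -> R[i]) : nc (\sum_i F i) <= \sum_i nc (F i).
Proof.
elim/big_rec2: _ => [|i y1 y2 _ h]; first by rewrite nc0.
by apply: le_trans (ncD _ _) _; rewrite lerD2l.
Qed.

Lemma nc_prod (I : finType) (F : I -> R[i]) : nc (\prod_i F i) = \prod_i nc (F i).
Proof.
elim/big_rec2: _ => [|i y1 y2 _ h]; first by rewrite nc1.
by rewrite ncM h.
Qed.

Definition bounded1 g := forall k a b, nc (g k a b) <= 1.

Lemma act_bound g v i : bounded1 g -> nc (act g v i) <= n1 v.
Proof.
move=> hg; apply: le_trans (nc_sum _) _; apply: ler_sum => j _.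
rewrite ncM nc_prod -[X in _ <= X]mul1r; apply: ler_wpM2r; first exact: nc_ge0.
apply: prodr_ile1 => k _; rewrite nc_ge0; exact: hg.
Qed.

End Act.

From HB Require Import structures.
From mathcomp Require Import all_boot all_order all_algebra.
From mathcomp Require Import sesquilinear spectral.
Set Implicit Arguments. Unset Strict Implicit. Unset Printing Implicit Defensive.
Import Order.TTheory GRing.Theory Num.Theory.
Local Open Scope ring_scope.
Local Open Scope sesquilinear_scope.

Section SVD.
Variable C : numClosedFieldType.

Lemma trC_mul m n p (A : 'M[C]_(m, n)) (B : 'M[C]_(n, p)) :
  (A *m B)^t* = B^t* *m A^t*.
Proof. by rewrite trmx_mul map_mxM. Qed.

Lemma unitary_tV n (P : 'M[C]_n) : P \is unitarymx -> P^t* *m P = 1%:M.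
Proof. by move=> /unitarymxP; apply: mulmx1C. Qed.

Lemma det_trC n (B : 'M[C]_n) : \det (B^t*) = (\det B)^*.
Proof. by rewrite det_map_mx det_tr. Qed.

Lemma diag_one n : diag_mx (\row_(i < n) (1 : C)) = 1%:M.
Proof.
by apply/matrixP => i j; rewrite !mxE.
Qed.

Lemma svd0 n (g : 'M[C]_n) : g \in unitmx ->
  exists U V (s : 'rV[C]_n),
    [/\ U \is unitarymx, V \is unitarymx & g = U *m diag_mx s *m V].
Proof.
move=> gU.
set A := g^t* *m g.
have AA : A^t* = A by rewrite /A trC_mul trmxCK.
have An : A \is normalmx by apply/normalmxP; rewrite AA.
have /orthomx_spectralP eA := An.
set P := spectralmx A in eA; set lam := spectral_diag A in eA.
have PU : P \is unitarymx := spectral_unitarymx A.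
rewrite invmx_unitary // in eA.
set B := g *m P^t*.
have eB : B^t* *m B = diag_mx lam.
  have -> : B^t* *m B = P *m A *m P^t*.
    by rewrite /B trC_mul trmxCK /A !mulmxA.
  rewrite eA !mulmxA (unitarymxP PU) mul1mx -mulmxA (unitarymxP PU) mulmx1.
  done.
have lam_ge0 : forall i, 0 <= lam 0 i.
  move=> i; have /matrixP /(_ i i) := eB; rewrite [in RHS]mxE eqxx mulr1n => <-.
  rewrite mxE; apply: sumr_ge0 => a _; rewrite !mxE -normCKC.
  by rewrite exprn_ge0.
have BU : B \in unitmx.
  by rewrite /B unitmx_mul gU /= unitarymx_unit // trmxC_unitary.
have lam_neq0 : forall i, lam 0 i != 0.
  move=> i; have : \det (B^t* *m B) != 0.
    rewrite det_mulmx det_trC mulf_neq0 // ?conjC_eq0 -unitfE -unitmxE //.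
  by rewrite eB det_diag (bigD1 i) //= mulf_eq0 negb_or => /andP[].
pose s := \row_(i < n) sqrtC (lam 0 i).
pose si := \row_(i < n) (sqrtC (lam 0 i))^-1.
set U := B *m diag_mx si.
have UtU : U^t* *m U = 1%:M.
  rewrite /U trC_mul tr_diag_mx map_diag_mx mulmxA -(mulmxA _ (B^t*)) eB.
  rewrite !mulmx_diag -diag_one; congr diag_mx; apply/matrixP => i j.
  rewrite !mxE.
  have hc : forall x : C, 0 <= x -> (Num.Num_conj__canonical__GRing_RMorphism C) x = x.
    exact: geC0_conj.
  rewrite hc; last by rewrite invr_ge0 sqrtC_ge0.
  rewrite mulrAC -expr2 exprVn sqrtCK mulVf //.
exists U, P, s; split => //.
  by apply/unitarymxP; apply: mulmx1C.
rewrite /U -(mulmxA B) mulmx_diag.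
have -> : diag_mx (\row_j (si 0 j * s 0 j)) = 1%:M.
  rewrite -diag_one; congr diag_mx; apply/matrixP => i j.
  rewrite !mxE mulVf //; rewrite sqrtC_eq0; exact: lam_neq0.
by rewrite mulmx1 /B -mulmxA unitary_tV // mulmx1.
Qed.


Lemma unitary_entry n (U : 'M[C]_n) : U \is unitarymx -> forall i j, `|U i j| <= 1.
Proof.
move=> /unitarymxP UU i j.
have e : \sum_a `|U i a| ^+ 2 = 1.
  have /matrixP /(_ i i) := UU; rewrite !mxE eqxx mulr1n => <-.
  by apply: eq_bigr => a _; rewrite normCK !mxE.
have h : `|U i j| ^+ 2 <= 1.
  rewrite -e (bigD1 j) //= lerDl; apply: sumr_ge0 => a _; exact: exprn_ge0.
rewrite -(ler_pXn2r (_ : (0 < 2)%N)) ?nnegrE ?expr1n //.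
Qed.

Lemma trCZ n (r : C) (U : 'M[C]_n) : (r *: U)^t* = r^* *: U^t*.
Proof. by apply/matrixP => i j; rewrite !mxE rmorphM. Qed.

Lemma diag_mxZ' n (r : C) (s : 'rV[C]_n) : diag_mx (r *: s) = r *: diag_mx s.
Proof. by apply/matrixP => i j; rewrite !mxE mulrnAr. Qed.

Lemma normalize_unitary n (U : 'M[C]_n) : (0 < n)%N -> U \is unitarymx ->
  exists r : C, [/\ r != 0, (r *: U) \is unitarymx & \det (r *: U) = 1].
Proof.
move=> n0 UU.
have dU : `|\det U| = 1.
  have : \det (U *m U^t* ) = 1 by rewrite (unitarymxP UU) det1.
  rewrite det_mulmx det_trC -normCK => /eqP.
  by rewrite pexpr_eq1 // => /eqP.
have dU0 : \det U != 0 by apply/eqP => h; rewrite h normr0 in dU; move/eqP: dU; rewrite eq_sym oner_eq0.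
set r := n.-root ((\det U)^-1).
have rn : r ^+ n = (\det U)^-1 by rewrite /r rootCK.
have nr : `|r| = 1 by rewrite /r norm_rootC normfV dU invr1 rootC1.
have r0 : r != 0 by apply/eqP => h; rewrite h normr0 in nr; move/eqP: nr; rewrite eq_sym oner_eq0.
exists r; split => //.
  apply/unitarymxP; rewrite trCZ -scalemxAl -scalemxAr (unitarymxP UU) scalerA.
  by rewrite -normCK nr expr1n scale1r.
by rewrite detZ rn mulVf.
Qed.

Lemma svd_SL n (g : 'M[C]_n) : (0 < n)%N -> \det g = 1 ->
  exists (W V : 'M[C]_n) (s : 'rV[C]_n),
    [/\ forall i j, `|W i j| <= 1, forall i j, `|V i j| <= 1,
        \det W = 1, \prod_i s 0 i = 1 & W *m g = diag_mx s *m V].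
Proof.
move=> n0 dg.
have gU : g \in unitmx by rewrite unitmxE dg unitr1.
have [U [V [s [UU VU eg]]]] := svd0 gU.
have [r [r0 rU dr]] := normalize_unitary n0 UU.
have [r' [r'0 r'U dr']] := normalize_unitary n0 VU.
set U' := r *: U; set V' := r' *: V.
set s' := (r^-1 * r'^-1) *: s.
have eg' : g = U' *m diag_mx s' *m V'.
  rewrite /U' /V' /s' diag_mxZ' -scalemxAl -scalemxAr -scalemxAl -scalemxAr.
  rewrite -scalemxAl !scalerA [r' * r]mulrC mulrACA (mulfV r0) (mulfV r'0) mulr1 scale1r.
  by rewrite -eg.
have U'u : U' \in unitmx by apply: unitarymx_unit.
exists (invmx U'), V', s'; split.
- rewrite invmx_unitary //; apply: unitary_entry; by rewrite trmxC_unitary.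
- exact: unitary_entry.
- by rewrite det_inv dr invr1.
- by move: dg; rewrite eg' !det_mulmx dr dr' mul1r mulr1 det_diag.
- by rewrite eg' -!mulmxA mulKmx.
Qed.

End SVD.

From HB Require Import structures.
From mathcomp Require Import all_boot all_order all_algebra.
From mathcomp Require Import classical_sets reals.
From mathcomp Require Import lra.
Set Implicit Arguments. Unset Strict Implicit. Unset Printing Implicit Defensive.
Import Order.TTheory GRing.Theory Num.Theory.
Local Open Scope ring_scope.

Section Unif.
Variable R : realType.

Lemma unif1 (K : R) (P : R -> R -> Prop) :
  (forall t r r', P t r -> 0 < r' -> r' <= r -> P t r') ->
  (forall t, `|t| <= K -> exists2 r, 0 < r & forall s, `|s| <= K -> `|s - t| < r -> P s r) ->
  exists2 r, 0 < r & forall s, `|s| <= K -> P s r.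
Proof.
move=> mono H.
have [hK|hK] := ltP K 0.
  exists 1 => // s hs; have := normr_ge0 s; lra.
pose S := fun t : R => -K <= t <= K /\ exists2 r, 0 < r & forall s, -K <= s <= t -> P s r.
have SK : S (-K).
  split; first by apply/andP; split; lra.
  have [r r0 hr] := H (-K) (ltac:(rewrite normrN ger0_norm //)).
  exists r => // s /andP[h1 h2].
  have -> : s = -K by lra.
  apply: hr; first by rewrite normrN ger0_norm.
  by rewrite subrr normr0.
have hS : has_sup S.
  split; first by exists (-K).
  by exists K => y [/andP[_ ->]].
set sig := sup S.
have sig_ub := sup_upper_bound hS.
have sigK : sig <= K.
  apply: ge_sup; first by exists (-K).
  by move=> y [/andP[_ ->]].
have sigK' : -K <= sig by apply: sig_ub.
have [rs rs0 hrs] := H sig (ltac:(rewrite ler_norml; apply/andP; split; lra)).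
have [t [/andP[t1 t2] [rt rt0 hrt]] tlt] := sup_adherent rs0 hS.
set rho := Num.min rt rs.
have rho0 : 0 < rho by rewrite lt_min rt0 rs0.
have claim : forall s, -K <= s <= K -> s < sig + rs -> P s rho.
  move=> s /andP[s1 s2] s3.
  have [st|ts] := leP s t.
    apply: mono (hrt s _) _ _; [by apply/andP | done | by rewrite ge_min lexx].
  apply: mono (hrs s _ _) _ _ => //.
  - by rewrite ler_norml; apply/andP; split; lra.
  - rewrite ltr_norml; apply/andP; split; move: tlt; rewrite -/sig; lra.
  - by rewrite ge_min lexx orbT.
have Kl : K < sig + rs / 2.
  rewrite ltNge; apply/negP => hle.
  have : S (sig + rs / 2).
    split; first by apply/andP; split; lra.
    exists rho => // s /andP[s1 s2]; apply: claim; first by apply/andP; split; lra.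
    lra.
  move=> /sig_ub; rewrite -/sig; lra.
exists rho => // s; rewrite ler_norml => /andP[s1 s2]; apply: claim; first by apply/andP; split; lra.
lra.
Qed.


Lemma unif2 (K : R) (A : R -> R -> Prop) (Q : R -> R -> R -> Prop) :
  (forall a b r r', Q a b r -> 0 < r' -> r' <= r -> Q a b r') ->
  (forall a b, A a b -> `|a| <= K /\ `|b| <= K) ->
  (forall a b, `|a| <= K -> `|b| <= K -> exists2 r, 0 < r &
      forall a' b', A a' b' -> `|a' - a| < r -> `|b' - b| < r -> Q a' b' r) ->
  exists2 r, 0 < r & forall a b, A a b -> Q a b r.
Proof.
move=> mono bnd H.
have step1 : forall a, `|a| <= K -> exists2 r, 0 < r &
    forall a' b', A a' b' -> `|a' - a| < r -> Q a' b' r.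
  move=> a ha.
  pose P := (fun b r => forall a' b', A a' b' -> `|a' - a| < r -> `|b' - b| < r -> Q a' b' r).
  have m1 : forall t r r', P t r -> 0 < r' -> r' <= r -> P t r'.
    move=> t r r' h r'0 r'r a' b' hA h1 h2.
    by apply: (mono _ _ _ _ (h a' b' hA _ _) r'0 r'r); apply: (lt_le_trans _ r'r).
  have h1 : forall t, `|t| <= K -> exists2 r, 0 < r & forall s, `|s| <= K -> `|s - t| < r -> P s r.
    move=> t ht; have [r r0 hr] := H a t ha ht.
    exists (r / 2) => [|s hs hst a' b' hA h1 h2]; first by lra.
    have e1 : `|a' - a| < r by apply: lt_trans h1 _; lra.
    have e2 : `|b' - t| < r.
      apply: le_lt_trans (ler_distD s b' t) _; lra.
    apply: mono (hr a' b' hA e1 e2) _ _; lra.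
  have [r r0 hr] := unif1 m1 h1.
  exists r => // a' b' hA h1'; apply: (hr b') => //; first by case: (bnd _ _ hA).
  by rewrite subrr normr0.
pose P := (fun a r => forall a' b', A a' b' -> `|a' - a| < r -> Q a' b' r).
have m1 : forall t r r', P t r -> 0 < r' -> r' <= r -> P t r'.
  move=> t r r' h r'0 r'r a' b' hA h1.
  by apply: (mono _ _ _ _ (h a' b' hA _) r'0 r'r); apply: (lt_le_trans _ r'r).
have h1 : forall t, `|t| <= K -> exists2 r, 0 < r & forall s, `|s| <= K -> `|s - t| < r -> P s r.
  move=> t ht; have [r r0 hr] := step1 t ht.
  exists (r / 2) => [|s hs hst a' b' hA h1]; first by lra.
  have e1 : `|a' - t| < r.
    apply: le_lt_trans (ler_distD s a' t) _; lra.
  apply: mono (hr a' b' hA e1) _ _; lra.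
have [r r0 hr] := unif1 m1 h1.
exists r => // a b hA; apply: (hr a) => //; first by case: (bnd _ _ hA).
by rewrite subrr normr0.
Qed.

End Unif.

Require Import Defs.
From HB Require Import structures.
From mathcomp Require Import all_boot all_order all_algebra.
From mathcomp Require Import sesquilinear spectral.
From mathcomp Require Import classical_sets reals.
From mathcomp.real_closed Require Import complex.
From mathcomp Require Import lra ring.
From Stdlib Require Import Classical FunctionalExtensionality ClassicalEpsilon.
Set Implicit Arguments. Unset Strict Implicit. Unset Printing Implicit Defensive.
Import Order.TTheory GRing.Theory Num.Theory.
Local Open Scope ring_scope.

Section Fin.
Variable R : realType.

Lemma finmin (I : finType) (P : I -> R -> Prop) :
  (forall i r r', P i r -> 0 < r' -> r' <= r -> P i r') ->
  (forall i, exists2 r, 0 < r & P i r) ->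
  exists2 r, 0 < r & forall i, P i r.
Proof.
move=> mono H.
suff : forall s : seq I, exists2 r, 0 < r & forall i, i \in s -> P i r.
  by move=> /(_ (enum I)) [r r0 hr]; exists r => // i; apply: hr; rewrite mem_enum.
elim => [|i s [r r0 hr]]; first by exists 1.
have [ri ri0 hri] := H i.
exists (Num.min r ri); first by rewrite lt_min r0 ri0.
move=> j; rewrite inE => /orP[/eqP->|js].
  by apply: mono hri _ _; rewrite ?lt_min ?r0 ?ri0 // ge_min lexx orbT.
by apply: mono (hr j js) _ _; rewrite ?lt_min ?r0 ?ri0 // ge_min lexx.
Qed.

End Fin.

Section Main.
Variable R : realType.
Variable N : nat.
Variable d : 'I_N -> nat.
Variable Psi x : vec R d.

Lemma approx1 (j0 : midx d) (hcl : in_closureP (Gorbit Psi) x) (delta : R) :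
  0 < delta -> delta <= nc (x j0) ->
  exists g, inG g /\ exists c : R[i], forall j, nc (c * act g Psi j - x j) < delta.
Proof.
move=> d0 dle.
pose O := fun y : vec R d => exists c : R[i], forall j, nc (c * y j - x j) < delta.
have Oopen : openH O.
  move=> y [c hc].
  pose P := fun j e => nc (c * y j - x j) + e < delta.
  have m1 : forall j r r', P j r -> 0 < r' -> r' <= r -> P j r'.
    by rewrite /P => j r r' h _ h'; lra.
  have hP : forall j, exists2 r, 0 < r & P j r.
    by move=> j; exists ((delta - nc (c * y j - x j)) / 2); rewrite /P; have := hc j; lra.
  have [e e0 he] := finmin m1 hP.
  exists (e / (nc c + 1)).
    by apply: divr_gt0 => //; have := nc_ge0 c; lra.
  move=> y' hy'; exists c => j.
  have h1 : nc (y j - y' j) < e / (nc c + 1).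
    exact: le_lt_trans (nc_le_vnorm (fun j => y j - y' j) j) hy'.
  have h2 : nc (c * y' j - x j) <= nc (c * y j - x j) + nc c * nc (y j - y' j).
    have -> : c * y' j - x j = (c * y j - x j) + - (c * (y j - y' j)) by ring.
    by apply: le_trans (ncD _ _) _; rewrite ncN ncM.
  have h3 : nc c * nc (y j - y' j) <= e.
    have hc0 := nc_ge0 c.
    have : nc c * nc (y j - y' j) <= nc c * (e / (nc c + 1)).
      by apply: ler_wpM2l => //; apply: ltW.
    move=> /le_trans; apply.
    rewrite mulrA ler_pdivrMr; last by lra.
    have := ltW e0; nra.
  have := he j; rewrite /P; lra.
have Onz : forall y, O y -> y <> @vzero R N d.
  move=> y [c hc] yz; have := hc j0; rewrite yz /vzero mulr0 sub0r ncN; lra.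
have Osc : forall y c, O y -> c != 0 -> O (vscale c y).
  move=> y c [c' hc'] cn0; exists (c' / c) => j; rewrite /vscale.
  by rewrite mulrA divfK.
have Ox : O x by exists 1 => j; rewrite mul1r subrr nc0.
have [y [[g [hg ->]] [_ [c hc]]]] := hcl O Oopen Onz Osc Ox.
by exists g; split => //; exists c.
Qed.


Lemma cE (z : R[i]) : (cRe z +i* cIm z)%C = z.
Proof. by case: z. Qed.

Lemma nc_diff_le (a b a' b' : R) :
  nc ((a' +i* b')%C - (a +i* b)%C) <= `|a' - a| + `|b' - b|.
Proof. by apply: le_trans (nc_le_ReIm _) _. Qed.

Lemma approx2 (hss : semistable Psi) (hx0 : x <> @vzero R N d)
  (hcl : in_closureP (Gorbit Psi) x)
  (hnot : ~ (exists y, y <> @vzero R N d /\ closureH (Gorbit Psi) y /\ proj_eq x y))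
  (eta : R) : 0 < eta ->
  exists g, inG g /\ exists c : R[i], nc c < eta /\
     forall j, nc (c * act g Psi j - x j) < eta.
Proof.
move=> eta0.
have [j0 xj0] : exists j0, x j0 != 0.
  apply: NNPP => H; apply: hx0; apply: functional_extensionality => j.
  apply: NNPP => hj; apply: H; exists j; exact/eqP.
set xj := nc (x j0).
have xj0' : 0 < xj by apply: nc_gt0.
have [d0 d00 hd0] := semistable_bound hss.
set X1 := n1 x.
have X1j : xj <= X1 by apply: nc_le_n1.
set M := (#|midx d|%:R : R).
have M0 : 0 <= M by apply: ler0n.
set Kc := (X1 + M) / d0 + 1.
have Kc0 : 0 < Kc.
  have : 0 <= (X1 + M) / d0 by apply: divr_ge0; lra.
  rewrite /Kc; lra.
have hfail : forall u : R[i], u != 0 -> exists2 eps : R, 0 < eps &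
    forall g, inG g -> eps <= n1 (fun j => u * x j - act g Psi j).
  move=> u u0; apply: NNPP => H; apply: hnot.
  exists (vscale u x); split.
    move=> /(congr1 (fun f => f j0)); rewrite /vscale /vzero => /eqP.
    by rewrite mulf_eq0 (negbTE u0) (negbTE xj0).
  split; last by exists u.
  move=> eps eps0; apply: NNPP => H2; apply: H; exists eps => // g hg.
  rewrite leNgt; apply/negP => hlt; apply: H2.
  exists (act g Psi); split; first by exists g.
  exact: le_lt_trans (vdist_le _ _) hlt.
pose A := fun a b : R => Kc^-1 <= nc (a +i* b)%C /\ nc (a +i* b)%C <= eta^-1.
pose Q := fun (a b r : R) => forall g, inG g -> r <= n1 (fun j => (a +i* b)%C * x j - act g Psi j).
have Qmono : forall a b r r', Q a b r -> 0 < r' -> r' <= r -> Q a b r'.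
  by move=> a b r r' h _ h' g hg; apply: le_trans h' (h g hg).
have Abnd : forall a b, A a b -> `|a| <= eta^-1 /\ `|b| <= eta^-1.
  move=> a b [_ h]; split.
    by apply: le_trans h; apply: (Re_le_nc (a +i* b)%C).
  by apply: le_trans h; apply: (Im_le_nc (a +i* b)%C).
have Aloc : forall a b, `|a| <= eta^-1 -> `|b| <= eta^-1 -> exists2 r, 0 < r &
      forall a' b', A a' b' -> `|a' - a| < r -> `|b' - b| < r -> Q a' b' r.
  move=> a b _ _; set u := (a +i* b)%C.
  have [hlo|hlo] := ltP (nc u) Kc^-1.
    exists ((Kc^-1 - nc u) / 2); first lra.
    move=> a' b' [hA1 hA2] h1 h2.
    have := nc_diff_le a b a' b'; have := ncD u ((a' +i* b')%C - u).
    rewrite addrC subrK -/u; lra.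
  have [hhi|hhi] := ltP eta^-1 (nc u).
    exists ((nc u - eta^-1) / 2); first lra.
    move=> a' b' [hA1 hA2] h1 h2.
    have := nc_diff_le a b a' b'; have := ncD (a' +i* b')%C (u - (a' +i* b')%C).
    rewrite addrC subrK ncBC -/u; lra.
  have u0 : u != 0.
    apply/eqP => hu; move: hlo; rewrite hu nc0 => h.
    have : 0 < Kc^-1 by rewrite invr_gt0. lra.
  have [eps eps0 heps] := hfail u u0.
  have X10 : 0 <= X1 by apply: n1_ge0.
  exists (eps / (2 * (X1 + 1))).
    by apply: divr_gt0 => //; lra.
  set r := eps / (2 * (X1 + 1)).
  have er : eps = 2 * r * X1 + 2 * r.
    have : r * (2 * (X1 + 1)) = eps by rewrite /r divfK //; apply: lt0r_neq0; lra.
    by move=> <-; ring.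
  have r0 : 0 < r by rewrite /r; apply: divr_gt0 => //; lra.
  clearbody r.
  move=> a' b' _ h1 h2 g hg.
  set u' := (a' +i* b')%C.
  have hd : nc (u - u') < 2 * r.
    rewrite ncBC; apply: le_lt_trans (nc_diff_le a b a' b') _; lra.
  have e1 : n1 (fun j => u * x j - act g Psi j) <=
            n1 (fun j => u' * x j - act g Psi j) + n1 (fun j => (u - u') * x j).
    have -> : n1 (fun j => u * x j - act g Psi j) =
              n1 (fun j => (u' * x j - act g Psi j) + (u - u') * x j).
      by apply: n1_ext => j; ring.
    exact: n1D.
  rewrite n1Z -/X1 in e1.
  have e2 : nc (u - u') * X1 <= 2 * r * X1.
    by apply: ler_wpM2r => //; apply: ltW.
  have := heps g hg; lra.
have [r1 r10 hr1] := unif2 Qmono Abnd Aloc.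
set delta := Num.min (Num.min 1 eta) (Num.min xj (r1 * eta / (M + 1))).
have del0 : 0 < delta.
  rewrite !lt_min ltr01 eta0 xj0' /=; apply: divr_gt0; [exact: mulr_gt0 | lra].
have delxj : delta <= xj by rewrite /delta !ge_min lexx !orbT.
have del1 : delta <= 1 by rewrite /delta !ge_min lexx.
have deleta : delta <= eta by rewrite /delta !ge_min lexx !orbT.
have delr : delta <= r1 * eta / (M + 1) by rewrite /delta !ge_min lexx !orbT.
have [g [hg [c hc]]] := approx1 hcl del0 delxj.
exists g; split => //; exists c; split; last first.
  by move=> j; apply: lt_le_trans (hc j) deleta.
have c0 : c != 0.
  apply/eqP => hc0; have := hc j0; rewrite hc0 mul0r sub0r ncN -/xj; lra.
have errb : n1 (fun j => c * act g Psi j - x j) <= M * delta.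
  by apply: n1_le_bound => j; apply: ltW.
have cb : nc c * d0 <= X1 + M.
  have h1 : n1 (fun j => c * act g Psi j) <= n1 (fun j => c * act g Psi j - x j) + X1.
    have -> : n1 (fun j => c * act g Psi j) =
              n1 (fun j => (c * act g Psi j - x j) + x j) by apply: n1_ext => j; ring.
    exact: n1D.
  rewrite n1Z in h1.
  have h2 : nc c * d0 <= nc c * n1 (act g Psi) by apply: ler_wpM2l; [exact: nc_ge0|exact: hd0].
  have : M * delta <= M by rewrite -[X in _ <= X]mulr1; apply: ler_wpM2l.
  lra.
rewrite ltNge; apply/negP => hce.
set u := c^-1.
have ncu : nc u = (nc c)^-1 by rewrite ncV.
have ncc0 : 0 < nc c by apply: nc_gt0.
have hA : A (cRe u) (cIm u).
  rewrite /A cE ncu; split.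
    rewrite lef_pV2 ?posrE //; rewrite /Kc.
    have : nc c <= (X1 + M) / d0 by rewrite ler_pdivlMr.
    lra.
  by rewrite lef_pV2 ?posrE.
have := hr1 _ _ hA g hg.
rewrite cE.
have -> : n1 (fun j => u * x j - act g Psi j) =
          nc u * n1 (fun j => - (c * act g Psi j - x j)).
  rewrite -n1Z; apply: n1_ext => j; rewrite /u.
  by rewrite opprB mulrBr mulrA mulVf // mul1r.
rewrite n1N => h.
have hb : nc u * n1 (fun j => c * act g Psi j - x j) <= eta^-1 * (M * delta).
  apply: ler_pM; [exact: nc_ge0 | exact: n1_ge0 | | exact: errb].
  by rewrite ncu lef_pV2 ?posrE.
have k1 : delta * (M + 1) <= r1 * eta by rewrite -ler_pdivlMr //; lra.
have hm : r1 * eta <= M * delta.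
  have e3 : r1 <= eta^-1 * (M * delta) := le_trans h hb.
  have : r1 * eta <= eta^-1 * (M * delta) * eta by rewrite ler_pM2r.
  by rewrite mulrAC mulVf ?mul1r //; apply: lt0r_neq0.
clear -k1 hm del0; lra.
Qed.

End Main.

Require Import Defs.
From HB Require Import structures.
From mathcomp Require Import all_boot all_order all_algebra.
From mathcomp Require Import sesquilinear spectral.
From mathcomp Require Import classical_sets reals.
From mathcomp.real_closed Require Import complex.
From mathcomp Require Import lra ring.
From Stdlib Require Import Classical FunctionalExtensionality ClassicalEpsilon.
Set Implicit Arguments. Unset Strict Implicit. Unset Printing Implicit Defensive.
Import Order.TTheory GRing.Theory Num.Theory.
Local Open Scope ring_scope.

Section Torus.
Variable R : realType.
Variable N : nat.
Variable d : 'I_N -> nat.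

Definition torus (t : forall k : 'I_N, 'I_(d k) -> R[i]) :=
  forall k, \prod_(a : 'I_(d k)) t k a = 1.

Definition feasible (B : {set midx d}) :=
  exists t, torus t /\ forall j, j \in B -> 2 <= nc (tprod t j).

Lemma torus_neq0 t : torus t -> forall j, tprod t j != 0.
Proof.
move=> ht j; apply/prodf_neq0 => k _; apply/eqP => h.
have := ht k; rewrite (bigD1 (j k)) //= h mul0r => /eqP.
by rewrite eq_sym oner_eq0.
Qed.

Lemma witness_unif : exists2 mu : R, 0 < mu & forall B, feasible B ->
  exists t, [/\ torus t, forall j, j \in B -> 2 <= nc (tprod t j)
             & forall j, mu <= nc (tprod t j)].
Proof.
pose P := fun (B : {set midx d}) (mu : R) => feasible B ->
  exists t, [/\ torus t, forall j, j \in B -> 2 <= nc (tprod t j)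
             & forall j, mu <= nc (tprod t j)].
have m1 : forall B r r', P B r -> 0 < r' -> r' <= r -> P B r'.
  move=> B r r' h _ h' /h [t [t1 t2 t3]]; exists t; split => // j.
  exact: le_trans h' (t3 j).
have h1 : forall B, exists2 r, 0 < r & P B r.
  move=> B; have [[t [ht hB]]|nf] := classic (feasible B); last first.
    by exists 1 => // /nf.
  pose Q := fun (j : midx d) (r : R) => r <= nc (tprod t j).
  have mq : forall j r r', Q j r -> 0 < r' -> r' <= r -> Q j r'.
    by move=> j r r' h _ h'; apply: le_trans h' h.
  have hq : forall j, exists2 r, 0 < r & Q j r.
    by move=> j; exists (nc (tprod t j)); [apply: nc_gt0; apply: torus_neq0 | rewrite /Q].
  have [r r0 hr] := finmin mq hq.
  by exists r => // _; exists t; split.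
exact: finmin m1 h1.
Qed.

Lemma nc_normC (z : R[i]) : `|z| = ((nc z)%:C)%C.
Proof. by case: z => a b; rewrite normc_def. Qed.

Lemma nc_le1 (z : R[i]) : `|z| <= 1 -> nc z <= 1.
Proof. by rewrite nc_normC -lecR. Qed.

Lemma decomp (hd : forall k, (2 <= d k)%N) (g : grp_elt R d) : inG g ->
  exists (W V : grp_elt R d) (s : forall k, 'rV[R[i]]_(d k)),
   [/\ bounded1 W, bounded1 V, forall k, \det (W k) = 1,
       forall k, \prod_i s k 0 i = 1 & forall k, W k *m g k = diag_mx (s k) *m V k].
Proof.
move=> hg.
have H : forall k, exists p : 'M[R[i]]_(d k) * 'M[R[i]]_(d k) * 'rV[R[i]]_(d k),
   [/\ forall i j, `|p.1.1 i j| <= 1, forall i j, `|p.1.2 i j| <= 1,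
       \det p.1.1 = 1, \prod_i p.2 0 i = 1 & p.1.1 *m g k = diag_mx p.2 *m p.1.2].
  move=> k.
  have hk : (0 < d k)%N by apply: leq_trans (hd k).
  have [W [V [s [h1 h2 h3 h4 h5]]]] := svd_SL hk (hg k).
  by exists (W, V, s).
pose f := fun k => proj1_sig (constructive_indefinite_description _ (H k)).
have hf : forall k, _ := fun k => proj2_sig (constructive_indefinite_description _ (H k)).
exists (fun k => (f k).1.1), (fun k => (f k).1.2), (fun k => (f k).2); split.
- by move=> k a b; apply: nc_le1; case: (hf k).
- by move=> k a b; apply: nc_le1; case: (hf k).
- by move=> k; case: (hf k).
- by move=> k; case: (hf k).
- by move=> k; case: (hf k).
Qed.

End Torus.

Require Import Defs.
From HB Require Import structures.
From mathcomp Require Import all_boot all_order all_algebra.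
From mathcomp Require Import sesquilinear spectral.
From mathcomp Require Import classical_sets reals.
From mathcomp.real_closed Require Import complex.
From mathcomp Require Import lra ring.
From Stdlib Require Import Classical FunctionalExtensionality ClassicalEpsilon.
Set Implicit Arguments. Unset Strict Implicit. Unset Printing Implicit Defensive.
Import Order.TTheory GRing.Theory Num.Theory.
Local Open Scope ring_scope.

Section Final.
Variable R : realType.
Variable N : nat.
Variable d : 'I_N -> nat.
Variable Psi x : vec R d.

Lemma row_eta n (s : 'rV[R[i]]_n) : \row_(a < n) s 0 a = s.
Proof. by apply/rowP => a; rewrite mxE. Qed.

Lemma main_est (hd : forall k, (2 <= d k)%N)
  (happ : forall eta : R, 0 < eta -> exists g, inG g /\ exists c : R[i], nc c < eta /\
     forall j, nc (c * act g Psi j - x j) < eta)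
  (eps : R) : 0 < eps -> exists h, inG h /\ n1 (act h x) < eps.
Proof.
move=> eps0.
set X1 := n1 x; set P1 := n1 Psi.
have X10 : 0 <= X1 by apply: n1_ge0.
have P10 : 0 <= P1 by apply: n1_ge0.
set M := (#|midx d|%:R : R).
have M0 : 0 <= M by apply: ler0n.
set Mp := M + 1.
have Mp0 : 0 < Mp by rewrite /Mp; lra.
have [mu mu0 hmu] := witness_unif R d.
set mu' := Num.min mu 1.
have mu'0 : 0 < mu' by rewrite lt_min mu0 ltr01.
have mu'1 : mu' <= 1 by rewrite ge_min lexx orbT.
have mu'mu : mu' <= mu by rewrite ge_min lexx.
pose B0 := 2 * Mp * X1 / eps.
have [m hm] : exists m : nat, B0 < 2 ^+ m.
  by exists (Num.bound B0); apply: upper_nthrootP.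
pose T := (2 : R) ^+ m.
have T0 : 0 < T by rewrite exprn_gt0.
pose Mu := mu' ^+ m.
have Mu0 : 0 < Mu by rewrite exprn_gt0.
pose theta := eps * Mu / (4 * Mp).
have th0 : 0 < theta by rewrite /theta; apply: divr_gt0; [apply: mulr_gt0 | lra].
pose eta := theta / (Mp + 2 * (P1 + 1)).
have eta0 : 0 < eta by rewrite /eta; apply: divr_gt0 => //; lra.
have eth : theta = eta * (Mp + 2 * (P1 + 1)).
  by rewrite /eta divfK //; apply: lt0r_neq0; lra.
have [g [hg [c [hc herr]]]] := happ eta eta0.
have [W [V [s [bW bV dW ds eWg]]]] := decomp hd hg.
pose al := fun k (a : 'I_(d k)) => s k 0 a.
have tal : torus al by move=> k; apply: ds.
pose z := act W x; pose w := act V Psi.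
have hz : forall j, nc (z j) <= X1 by move=> j; apply: act_bound.
have hw : forall j, nc (w j) <= P1 by move=> j; apply: act_bound.
have eG : gmul W g = gmul (dmx al) V.
  apply: functional_extensionality_dep => k.
  by rewrite /gmul /dmx /al row_eta eWg.
have key : forall j, nc (c * (tprod al j * w j) - z j) <= Mp * eta.
  move=> j.
  have e1 : act W (fun j => c * act g Psi j - x j) j = c * (tprod al j * w j) - z j.
    rewrite act_sub act_scale act_comp eG act_diag_l //.
  rewrite -e1; apply: le_trans (act_bound _ _ bW) _.
  apply: le_trans (n1_le_bound (e := eta) _) _.
    by move=> i; apply: ltW.
  by rewrite /Mp mulrDl mul1r lerDl; apply: ltW.
pose Bs := [set j | theta <= nc (z j)].
have fB : @feasible R N d Bs.
  exists al; split => // j; rewrite inE => hj.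
  rewrite leNgt; apply/negP => hlt.
  have h1 : nc (c * (tprod al j * w j)) <= eta * (2 * P1).
    rewrite !ncM; apply: ler_pM; [exact: nc_ge0 | by rewrite mulr_ge0 ?nc_ge0 | exact: ltW |].
    by apply: ler_pM; [exact: nc_ge0 | exact: nc_ge0 | exact: ltW | exact: hw].
  have h2 := ncB (c * (tprod al j * w j)) (c * (tprod al j * w j) - z j).
  rewrite opprB addrC subrK in h2.
  have := key j.
  have : 0 <= eta * P1 by rewrite mulr_ge0 // ltW.
  lra.
have [t [tt tB tmu]] := hmu Bs fB.
pose tinv := fun k (a : 'I_(d k)) => (t k a ^+ m)^-1.
exists (gmul (dmx tinv) W); split.
  move=> k; rewrite /gmul det_mulmx dW mulr1 /dmx det_diag.
  under eq_bigr do rewrite mxE.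
  by rewrite /tinv prodfV prodrXl tt expr1n invr1.
have tpinv : forall j, tprod tinv j = ((tprod t j) ^+ m)^-1.
  by move=> j; rewrite /tprod /tinv prodfV prodrXl.
have tnz := torus_neq0 tt.
have bnd : forall j, nc (act (gmul (dmx tinv) W) x j) <= X1 / T + theta / Mu.
  move=> j; rewrite act_diag_l -/z tpinv ncM ncV ncX.
  have q0 : 0 < nc (tprod t j) ^+ m by rewrite exprn_gt0 // nc_gt0.
  have [jB|jB] := boolP (j \in Bs).
    have hT : T <= nc (tprod t j) ^+ m.
      by rewrite /T; apply: lerXn2r; rewrite ?nnegrE ?nc_ge0 // ?tB //; lra.
    have : (nc (tprod t j) ^+ m)^-1 * nc (z j) <= T^-1 * X1.
      apply: ler_pM; [by rewrite invr_ge0 ltW | exact: nc_ge0 | | exact: hz].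
      by rewrite lef_pV2 ?posrE.
    have : 0 <= theta / Mu by apply: divr_ge0; apply: ltW.
    rewrite [X1 / T]mulrC; lra.
  have hzj : nc (z j) <= theta by move: jB; rewrite inE -ltNge => /ltW.
  have hMu : Mu <= nc (tprod t j) ^+ m.
    rewrite /Mu; apply: lerXn2r; rewrite ?nnegrE ?nc_ge0 ?(ltW mu'0) //.
    exact: le_trans mu'mu (tmu j).
  have : (nc (tprod t j) ^+ m)^-1 * nc (z j) <= Mu^-1 * theta.
    apply: ler_pM; [by rewrite invr_ge0 ltW | exact: nc_ge0 | | exact: hzj].
    by rewrite lef_pV2 ?posrE.
  have : 0 <= X1 / T by apply: divr_ge0 => //; apply: ltW.
  rewrite [theta / Mu]mulrC; lra.
apply: le_lt_trans (n1_le_bound bnd) _.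
have e1 : M * (X1 / T + theta / Mu) <= Mp * (X1 / T + theta / Mu).
  apply: ler_wpM2r; last by rewrite /Mp; lra.
  by apply: addr_ge0; apply: divr_ge0 => //; apply: ltW.
apply: le_lt_trans e1 _.
have e2 : Mp * (theta / Mu) = eps / 4.
  rewrite /theta; field; apply/andP; split; apply: lt0r_neq0; lra.
have e3 : Mp * (X1 / T) < eps / 2.
  have : B0 * eps = 2 * Mp * X1 by rewrite /B0 divfK //; apply: lt0r_neq0.
  rewrite mulrA ltr_pdivrMr // => hB.
  have : B0 * eps < T * eps by rewrite ltr_pM2r.
  lra.
rewrite mulrDr; lra.
Qed.

End Final.

Require Import Defs.
From HB Require Import structures.
From mathcomp Require Import all_boot all_order all_algebra.
From mathcomp Require Import reals.
From mathcomp.real_closed Require Import complex.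
From Stdlib Require Import Classical FunctionalExtensionality.
Import Order.TTheory GRing.Theory Num.Theory.
Local Open Scope ring_scope.

Theorem mainTheorem2 (R : realType) (N : nat) (d : 'I_N -> nat)
  (hd : forall k, (2 <= d k)%N) (Psi : vec R d) :
  semistable Psi ->
  forall x : vec R d, x <> @vzero R N d ->
    (* [x] in closure (in P(H)) of [G Psi] *)
    in_closureP (Gorbit Psi) x ->
    (* [x] not in [closure (in H) of G Psi] *)
    ~ (exists y, y <> @vzero R N d /\ closureH (Gorbit Psi) y /\ proj_eq x y) ->
    (* [x] in [N \ {0}] *)
    exists y, y <> @vzero R N d /\ nullcone y /\ proj_eq x y.
Proof.
move=> hss x hx0 hcl hnot.
exists x; split => //; split.
  move=> eps eps0.
  have happ := approx2 hss hx0 hcl hnot.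
  have [h [hh hlt]] := main_est hd happ eps0.
  exists (act h x); split; first by exists h.
  exact: le_lt_trans (vdist0_le _) hlt.
exists 1; first exact: oner_neq0.
by apply: functional_extensionality => j; rewrite /vscale mul1r.
Qed.
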